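(* Let $(X,d)$ be a Polish metric space, viewed as a structure in the metric signature. Then $X$ has Scott rank $0$ if and only if $X$ is ultrahomogeneous.
   Context: A metric space $(X,d)$ is viewed as a first-order structure in the signature $\{R_q : q\in\mathbb{Q}^+\}$ of binary relation symbols, where $R_q(x,y)$ holds iff $d(x,y)<q$. For a structure $M$ and finite tuples $\bar a,\bar b$ of the same length from $M$, define $\bar a\equiv_\alpha\bar b$ by induction on ordinals $\alpha$: $\bar a\equiv_0\bar b$ iff $\bar a,\bar b$ have the same quantifier-free type; for limit $\alpha$, $\bar a\equiv_\alpha\bar b$ iff $\bar a\equiv_\beta\bar b$ for all $\beta<\alpha$; $\bar a\equiv_{\alpha+1}\bar b$ iff for every $x\in M$ there is $y\in M$ with $\bar a x\equiv_\alpha\bar b y$, and for every $y\in M$ there is $x\in M$ with $\bar a x\equiv_\alpha \bar b y$. The Scott rank of $M$ is the least ordinal $\alpha$ such that for all finite tuples $\bar a,\bar b$ from $M$, $\bar a\equiv_\alpha\bar b$ implies $\bar a\equiv_{\alpha+1}\bar b$. A metric space $X$ is ultrahomogeneous if every isometry between finite subsets of $X$ extends to an isometry of $X$ onto itself. *)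

(* Defs.v *)
From Stdlib Require Import Reals QArith Qreals List.
Open Scope R_scope.

Definition is_metric {X : Type} (d : X -> X -> R) : Prop :=
  (forall x y, 0 <= d x y) /\
  (forall x y, d x y = 0 <-> x = y) /\
  (forall x y, d x y = d y x) /\
  (forall x y z, d x z <= d x y + d y z).

Definition cauchy_seq {X : Type} (d : X -> X -> R) (u : nat -> X) : Prop :=
  forall eps, 0 < eps -> exists N, forall m n, (N <= m)%nat -> (N <= n)%nat ->
    d (u m) (u n) < eps.

Definition converges_to {X : Type} (d : X -> X -> R) (u : nat -> X) (l : X) : Prop :=
  forall eps, 0 < eps -> exists N, forall n, (N <= n)%nat -> d (u n) l < eps.

Definition complete_metric {X : Type} (d : X -> X -> R) : Prop :=
  forall u, cauchy_seq d u -> exists l, converges_to d u l.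

(** Separable: has a countable dense subset (the empty space is separable). *)
Definition separable_metric {X : Type} (d : X -> X -> R) : Prop :=
  (forall x : X, False) \/
  exists s : nat -> X, forall x eps, 0 < eps -> exists n, d x (s n) < eps.

Definition polish_metric {X : Type} (d : X -> X -> R) : Prop :=
  is_metric d /\ complete_metric d /\ separable_metric d.

(** Tuples of length n are represented by a : nat -> X, using indices i < n.
    [snoc a n x] is the (n+1)-tuple a x. *)
Definition snoc {X : Type} (a : nat -> X) (n : nat) (x : X) : nat -> X :=
  fun i => if Nat.eqb i n then x else a i.

(** Same quantifier-free type in the signature {R_q : q in Q+} (with equality):
    all atomic formulas x_i = x_j and R_q(x_i, x_j) agree. *)
Definition qf_equiv {X : Type} (d : X -> X -> R) (n : nat) (a b : nat -> X) : Prop :=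
  forall i j, (i < n)%nat -> (j < n)%nat ->
    (a i = a j <-> b i = b j) /\
    (forall q : Q, (0 < q)%Q -> (d (a i) (a j) < Q2R q <-> d (b i) (b j) < Q2R q)).

Fixpoint bf_equiv {X : Type} (d : X -> X -> R) (k : nat) (n : nat) (a b : nat -> X) : Prop :=
  match k with
  | O => qf_equiv d n a b
  | S k' =>
      (forall x, exists y, bf_equiv d k' (S n) (snoc a n x) (snoc b n y)) /\
      (forall y, exists x, bf_equiv d k' (S n) (snoc a n x) (snoc b n y))
  end.

Definition scott_rank_zero {X : Type} (d : X -> X -> R) : Prop :=
  forall n (a b : nat -> X), bf_equiv d 0 n a b -> bf_equiv d 1 n a b.

(** A finite subset is given by a list A;
    a map f that preserves distances on A is an isometry from A onto f(A). *)
Definition ultrahomogeneous {X : Type} (d : X -> X -> R) : Prop :=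
  forall (A : list X) (f : X -> X),
    (forall x y, In x A -> In y A -> d (f x) (f y) = d x y) ->
    exists g : X -> X,
      (forall x y, d (g x) (g y) = d x y) /\
      (forall y, exists x, g x = y) /\
      (forall x, In x A -> g x = f x).

(* Main.v *)
Require Import Defs.
From Stdlib Require Import Reals QArith Qreals List Lia Lra ClassicalEpsilon.
Open Scope R_scope.

Lemma rat_between (r s : R) : 0 <= r -> r < s -> exists q : Q, (0 < q)%Q /\ r < Q2R q < s.
Proof.
  intros Hr Hrs.
  destruct (archimed (/(s - r))) as [HN1 HN2].
  set (N := up (/(s-r))) in *.
  assert (Hsr : 0 < /(s-r)) by (apply Rinv_0_lt_compat; lra).
  assert (HNp : 0 < IZR N) by lra.
  assert (HNz : (0 < N)%Z) by (apply lt_IZR; exact HNp).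
  destruct (archimed (r * IZR N)) as [Hz1 Hz2].
  set (z := up (r * IZR N)) in *.
  exists (Qmake z (Z.to_pos N)).
  assert (HQ : Q2R (Qmake z (Z.to_pos N)) = IZR z / IZR N).
  { unfold Q2R; simpl. rewrite Z2Pos.id by lia. reflexivity. }
  assert (Hlo : r < IZR z / IZR N).
  { apply (Rmult_lt_reg_r (IZR N)); [lra|]. unfold Rdiv. rewrite Rmult_assoc, Rinv_l by lra. lra. }
  assert (Hhi : IZR z / IZR N < s).
  { assert (h1 : / IZR N < s - r).
    { rewrite <- (Rinv_inv (s - r)). apply Rinv_lt_contravar; [|lra].
      apply Rmult_lt_0_compat; lra. }
    assert (h2 : IZR z / IZR N <= r + / IZR N).
    { apply (Rmult_le_reg_r (IZR N)); [lra|]. unfold Rdiv.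
      rewrite Rmult_assoc, Rinv_l by lra. rewrite Rmult_plus_distr_r, Rinv_l by lra. lra. }
    lra. }
  split; [| rewrite HQ; lra].
  apply Rlt_Qlt. rewrite HQ. unfold Q2R; simpl. lra.
Qed.
Definition iso {X : Type} (d : X -> X -> R) (n : nat) (a b : nat -> X) : Prop :=
  forall i j, (i < n)%nat -> (j < n)%nat -> d (a i) (a j) = d (b i) (b j).

Lemma dist_eq_of_rat (r s : R) : 0 <= r -> 0 <= s ->
  (forall q : Q, (0 < q)%Q -> (r < Q2R q <-> s < Q2R q)) -> r = s.
Proof.
  intros Hr Hs H. destruct (Rtotal_order r s) as [h|[h|h]]; auto.
  - destruct (rat_between r s Hr h) as [q [Hq [h1 h2]]]. apply H in h1; auto. lra.
  - destruct (rat_between s r Hs h) as [q [Hq [h1 h2]]]. apply H in h1; auto. lra.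
Qed.

Lemma qf_iso {X} (d : X -> X -> R) n a b : is_metric d ->
  (qf_equiv d n a b <-> iso d n a b).
Proof.
  intros [Hpos [Hz [Hsym Htri]]]. split.
  - intros H i j Hi Hj. destruct (H i j Hi Hj) as [_ H2]. apply dist_eq_of_rat; auto.
  - intros H i j Hi Hj. split.
    + rewrite <- !Hz, H by auto. tauto.
    + intros q _. rewrite H by auto. tauto.
Qed.

Lemma iso_snoc {X} (d : X -> X -> R) n a b x y : is_metric d ->
  iso d n a b -> (forall i, (i < n)%nat -> d (a i) x = d (b i) y) ->
  iso d (S n) (snoc a n x) (snoc b n y).
Proof.
  intros [Hpos [Hz [Hsym Htri]]] H Hx i j Hi Hj. unfold snoc.
  destruct (Nat.eqb_spec i n); destruct (Nat.eqb_spec j n).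
  - rewrite (proj2 (Hz x x) eq_refl), (proj2 (Hz y y) eq_refl); auto.
  - rewrite Hsym, (Hsym y). apply Hx; lia.
  - apply Hx; lia.
  - apply H; lia.
Qed.

Lemma iso_snoc_inv {X} (d : X -> X -> R) n a b x y :
  iso d (S n) (snoc a n x) (snoc b n y) -> iso d n a b /\ (forall i, (i < n)%nat -> d (a i) x = d (b i) y).
Proof.
  intros H. split.
  - intros i j Hi Hj. specialize (H i j ltac:(lia) ltac:(lia)). unfold snoc in H.
    destruct (Nat.eqb_spec i n); [lia|]. destruct (Nat.eqb_spec j n); [lia|]. exact H.
  - intros i Hi. specialize (H i n ltac:(lia) ltac:(lia)). unfold snoc in H.
    destruct (Nat.eqb_spec i n); [lia|]. rewrite Nat.eqb_refl in H. exact H.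
Qed.

Lemma sr0_iso {X} (d : X -> X -> R) : is_metric d -> scott_rank_zero d ->
  forall n a b, iso d n a b ->
  (forall x, exists y, iso d (S n) (snoc a n x) (snoc b n y)) /\
  (forall y, exists x, iso d (S n) (snoc a n x) (snoc b n y)).
Proof.
  intros Hm Hs n a b H. apply (qf_iso d n a b Hm) in H.
  destruct (Hs n a b H) as [H1 H2]. split.
  - intros x. destruct (H1 x) as [y Hy]. exists y. apply (qf_iso _ _ _ _ Hm). exact Hy.
  - intros y. destruct (H2 y) as [x Hx]. exists x. apply (qf_iso _ _ _ _ Hm). exact Hx.
Qed.
Lemma uh_sr0 {X} (d : X -> X -> R) : is_metric d -> ultrahomogeneous d -> scott_rank_zero d.
Proof.
  intros Hm Hu n a b H0. pose proof Hm as [Hpos [Hz [Hsym Htri]]].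
  apply (qf_iso d n a b Hm) in H0.
  set (f := fun x => epsilon (inhabits x) (fun y => exists i, (i < n)%nat /\ a i = x /\ b i = y)).
  assert (Hf : forall i, (i < n)%nat -> f (a i) = b i).
  { intros i Hi. unfold f.
    destruct (epsilon_spec (inhabits (a i)) (fun y => exists i0, (i0 < n)%nat /\ a i0 = a i /\ b i0 = y))
      as [j [Hj [Ha Hb]]].
    { exists (b i), i. auto. }
    rewrite <- Hb. apply Hz. rewrite <- (H0 j i Hj Hi), Ha. apply Hz; auto. }
  assert (HA : forall x, In x (map a (seq 0 n)) -> exists i, (i < n)%nat /\ a i = x).
  { intros x Hx. apply in_map_iff in Hx. destruct Hx as [i [Hi Hs]]. apply in_seq in Hs.
    exists i. split; [lia|auto]. }
  destruct (Hu (map a (seq 0 n)) f) as [g [Hg1 [Hg2 Hg3]]].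
  { intros x y Hx Hy. destruct (HA x Hx) as [i [Hi <-]]. destruct (HA y Hy) as [j [Hj <-]].
    rewrite !Hf by auto. symmetry. apply H0; auto. }
  assert (Hga : forall i, (i < n)%nat -> g (a i) = b i).
  { intros i Hi. rewrite Hg3. apply Hf; auto. apply in_map, in_seq. lia. }
  simpl. split.
  - intros x. exists (g x). apply (qf_iso _ _ _ _ Hm). apply iso_snoc; auto.
    intros i Hi. rewrite <- Hga by auto. symmetry; apply Hg1.
  - intros y. destruct (Hg2 y) as [x <-]. exists x. apply (qf_iso _ _ _ _ Hm). apply iso_snoc; auto.
    intros i Hi. rewrite <- Hga by auto. symmetry; apply Hg1.
Qed.
Definition dense_seq {X} (d : X -> X -> R) (u : nat -> X) :=
  forall x eps, 0 < eps -> exists i, d x (u i) < eps.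

Lemma small_inv (eps : R) : 0 < eps -> exists N, forall m, (N <= m)%nat -> / (INR m + 1) < eps.
Proof.
  intros He. destruct (archimed_cor1 eps He) as [N [H1 H2]]. exists N. intros m Hm.
  apply le_INR in Hm. apply lt_INR in H2. simpl in H2.
  eapply Rle_lt_trans; [|exact H1]. apply Rinv_le_contravar; lra.
Qed.

Lemma eq_of_close (a b : R) : (forall eps, 0 < eps -> Rabs (a - b) < eps) -> a = b.
Proof.
  intros H. destruct (Req_dec a b) as [|n]; auto. exfalso.
  specialize (H (Rabs (a - b))). assert (0 < Rabs (a-b)) by (apply Rabs_pos_lt; lra).
  specialize (H H0). lra.
Qed.

Lemma uniq_coord {X} (d : X -> X -> R) (w : nat -> X) y y' : is_metric d -> dense_seq d w ->
  (forall i, d (w i) y = d (w i) y') -> y = y'.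
Proof.
  intros [Hpos [Hz [Hsym Htri]]] Hw H. apply Hz. apply eq_of_close. intros eps He.
  rewrite Rminus_0_r, Rabs_pos_eq by auto.
  destruct (Hw y (eps/2)) as [i Hi]; [lra|].
  pose proof (Htri y (w i) y'). rewrite (Hsym y (w i)) in *. rewrite H in *. lra.
Qed.

Lemma exist_coord {X} (d : X -> X -> R) (u v : nat -> X) : is_metric d -> complete_metric d ->
  (forall i j, d (u i) (u j) = d (v i) (v j)) -> dense_seq d u ->
  forall x, exists y, forall i, d (v i) y = d (u i) x.
Proof.
  intros Hm Hc Huv Hu x. pose proof Hm as [Hpos [Hz [Hsym Htri]]].
  set (idx := fun k => epsilon (inhabits 0%nat) (fun i => d x (u i) < / (INR k + 1))).
  assert (Hidx : forall k, d x (u (idx k)) < / (INR k + 1)).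
  { intros k. unfold idx. apply epsilon_spec. apply Hu.
    apply Rinv_0_lt_compat. pose proof (pos_INR k). lra. }
  set (w := fun k => v (idx k)).
  destruct (Hc w) as [y Hy].
  { intros eps He. destruct (small_inv (eps/2)) as [N HN]; [lra|]. exists N.
    intros m n Hm' Hn'. unfold w. rewrite <- Huv.
    pose proof (HN m Hm'). pose proof (HN n Hn'). pose proof (Hidx m). pose proof (Hidx n).
    pose proof (Htri (u (idx m)) x (u (idx n))). rewrite (Hsym (u (idx m)) x) in *. lra. }
  exists y. intros i. apply eq_of_close. intros eps He.
  destruct (Hy (eps/2)) as [N1 H1]; [lra|]. destruct (small_inv (eps/2)) as [N2 H2]; [lra|].
  set (k := (N1 + N2)%nat).
  specialize (H1 k ltac:(unfold k; lia)). specialize (H2 k ltac:(unfold k; lia)).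
  pose proof (Hidx k). unfold w in H1.
  pose proof (Htri (v i) (v (idx k)) y). pose proof (Htri (u i) (u (idx k)) x).
  pose proof (Htri (u i) x (u (idx k))). pose proof (Htri (v i) y (v (idx k))).
  rewrite <- Huv in *. rewrite (Hsym y (v (idx k))) in *. rewrite (Hsym (u (idx k)) x) in *.
  apply Rabs_def1; lra.
Qed.
Lemma extend_iso {X} (d : X -> X -> R) (u v : nat -> X) : is_metric d -> complete_metric d ->
  (forall i j, d (u i) (u j) = d (v i) (v j)) -> dense_seq d u -> dense_seq d v ->
  exists g : X -> X, (forall x y, d (g x) (g y) = d x y) /\ (forall y, exists x, g x = y) /\
    (forall j, g (u j) = v j).
Proof.
  intros Hm Hc Huv Hu Hv. pose proof Hm as [Hpos [Hz [Hsym Htri]]].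
  set (P := fun x y => forall i, d (v i) y = d (u i) x).
  set (g := fun x => epsilon (inhabits x) (P x)).
  assert (Hg : forall x, P x (g x)).
  { intros x. apply epsilon_spec. apply (exist_coord d u v); auto. }
  exists g. split; [|split].
  - intros x y. apply eq_of_close. intros eps He.
    destruct (Hu x (eps/2)) as [i Hi]; [lra|].
    pose proof (Hg x i). pose proof (Hg y i).
    pose proof (Htri (g x) (v i) (g y)). pose proof (Htri (u i) x y).
    pose proof (Htri x (u i) y). pose proof (Htri (v i) (g x) (g y)).
    rewrite (Hsym (g x) (v i)) in *. rewrite (Hsym x (u i)) in *.
    apply Rabs_def1; lra.
  - intros y. destruct (exist_coord d v u Hm Hc (fun i j => eq_sym (Huv i j)) Hv y) as [x Hx].
    exists x. apply (uniq_coord d v); auto. intros i. rewrite (Hg x i). auto.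
  - intros j. apply (uniq_coord d v); auto. intros i. rewrite (Hg (u j) i). auto.
Qed.
Definition fwd {X} (d : X -> X -> R) n (a b : nat -> X) x :=
  epsilon (inhabits x) (fun y => iso d (S n) (snoc a n x) (snoc b n y)).
Definition bwd {X} (d : X -> X -> R) n (a b : nat -> X) y :=
  epsilon (inhabits y) (fun x => iso d (S n) (snoc a n x) (snoc b n y)).

Fixpoint BF {X} (d : X -> X -> R) (s : nat -> X) (n0 : nat) (a0 b0 : nat -> X) (k : nat)
  : (nat -> X) * (nat -> X) :=
  match k with
  | O => (a0, b0)
  | S k' =>
    let a := fst (BF d s n0 a0 b0 k') in let b := snd (BF d s n0 a0 b0 k') in
    let n := (n0 + k')%nat in let m := Nat.div2 k' in
    if Nat.even k' then (snoc a n (s m), snoc b n (fwd d n a b (s m)))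
    else (snoc a n (bwd d n a b (s m)), snoc b n (s m))
  end.

Section BFs.
Context {X : Type} (d : X -> X -> R) (s : nat -> X) (n0 : nat) (a0 b0 : nat -> X).
Notation T := (BF d s n0 a0 b0).

Lemma BF_inv : is_metric d -> scott_rank_zero d -> iso d n0 a0 b0 ->
  forall k, iso d (n0 + k) (fst (T k)) (snd (T k)).
Proof.
  intros Hm Hs H0 k. induction k as [|k IH].
  - rewrite Nat.add_0_r. exact H0.
  - rewrite Nat.add_succ_r. destruct (sr0_iso d Hm Hs _ _ _ IH) as [H1 H2].
    simpl. destruct (Nat.even k); simpl.
    + unfold fwd. apply epsilon_spec. apply H1.
    + unfold bwd. apply epsilon_spec. apply H2.
Qed.

Lemma BF_step k i : (i < n0 + k)%nat ->
  fst (T (S k)) i = fst (T k) i /\ snd (T (S k)) i = snd (T k) i.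
Proof.
  intros Hi. simpl. assert (E : Nat.eqb i (n0 + k) = false) by (apply Nat.eqb_neq; lia).
  destruct (Nat.even k); simpl; unfold snoc; rewrite E; auto.
Qed.

Lemma BF_stable k l i : (i < n0 + k)%nat ->
  fst (T (k + l)) i = fst (T k) i /\ snd (T (k + l)) i = snd (T k) i.
Proof.
  intros Hi. induction l as [|l IH].
  - rewrite Nat.add_0_r. auto.
  - rewrite Nat.add_succ_r. destruct (BF_step (k + l) i ltac:(lia)) as [e1 e2].
    rewrite e1, e2. exact IH.
Qed.

Definition alpha i := fst (T (S i)) i.
Definition beta i := snd (T (S i)) i.

Lemma alpha_beta k i : (i < n0 + k)%nat -> alpha i = fst (T k) i /\ beta i = snd (T k) i.
Proof.
  intros Hi. unfold alpha, beta.
  destruct (BF_stable (S i) k i ltac:(lia)) as [e1 e2].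
  destruct (BF_stable k (S i) i Hi) as [f1 f2].
  rewrite <- e1, <- e2, <- f1, <- f2, Nat.add_comm. auto.
Qed.

Lemma alpha_iso : is_metric d -> scott_rank_zero d -> iso d n0 a0 b0 ->
  forall i j, d (alpha i) (alpha j) = d (beta i) (beta j).
Proof.
  intros Hm Hs H0 i j.
  destruct (alpha_beta (S (i + j)) i ltac:(lia)) as [e1 e2].
  destruct (alpha_beta (S (i + j)) j ltac:(lia)) as [f1 f2].
  rewrite e1, e2, f1, f2. apply BF_inv; auto; lia.
Qed.

Lemma alpha_init i : (i < n0)%nat -> alpha i = a0 i /\ beta i = b0 i.
Proof. intros Hi. apply (alpha_beta 0). lia. Qed.

Lemma BF_S k : T (S k) =
    (if Nat.even k then (snoc (fst (T k)) (n0 + k) (s (Nat.div2 k)),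
       snoc (snd (T k)) (n0 + k) (fwd d (n0 + k) (fst (T k)) (snd (T k)) (s (Nat.div2 k))))
    else (snoc (fst (T k)) (n0 + k) (bwd d (n0 + k) (fst (T k)) (snd (T k)) (s (Nat.div2 k))),
       snoc (snd (T k)) (n0 + k) (s (Nat.div2 k)))).
Proof. reflexivity. Qed.

Lemma alpha_even m : alpha (n0 + 2 * m) = s m.
Proof.
  destruct (alpha_beta (S (2 * m)) (n0 + 2 * m) ltac:(lia)) as [e _]. rewrite e.
  assert (h1 : Nat.even (2 * m) = true) by (rewrite Nat.even_mul; reflexivity).
  assert (h2 : Nat.div2 (2 * m) = m) by (rewrite Nat.div2_div, Nat.mul_comm, Nat.div_mul; lia).
  rewrite BF_S, h1, h2. cbn [fst]. unfold snoc. rewrite Nat.eqb_refl. reflexivity.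
Qed.

Lemma beta_odd m : beta (n0 + S (2 * m)) = s m.
Proof.
  destruct (alpha_beta (S (S (2 * m))) (n0 + S (2 * m)) ltac:(lia)) as [_ e]. rewrite e.
  assert (h1 : Nat.even (S (2 * m)) = false) by (rewrite Nat.even_succ, Nat.odd_mul; reflexivity).
  rewrite BF_S, h1, Nat.div2_succ_double. cbn [snd]. unfold snoc. rewrite Nat.eqb_refl. reflexivity.
Qed.
End BFs.
Lemma sr0_uh {X} (d : X -> X -> R) : polish_metric d -> scott_rank_zero d -> ultrahomogeneous d.
Proof.
  intros [Hm [Hc Hsep]] Hs A f Hf.
  destruct Hsep as [Hempty | [s Hsd]].
  { exists (fun x => x). split; [|split]; auto.
    - intros y. exists y. reflexivity.
    - intros x. destruct (Hempty x). }
  pose proof Hm as [Hpos [Hz [Hsym Htri]]].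
  set (n0 := length A). set (a0 := fun i => nth i A (s 0%nat)). set (b0 := fun i => f (a0 i)).
  assert (H0 : iso d n0 a0 b0).
  { intros i j Hi Hj. unfold b0. symmetry. apply Hf; apply nth_In; auto. }
  assert (Da : dense_seq d (alpha d s n0 a0 b0)).
  { intros x eps He. destruct (Hsd x eps He) as [m Hm']. exists (n0 + 2 * m)%nat.
    rewrite alpha_even. exact Hm'. }
  assert (Db : dense_seq d (beta d s n0 a0 b0)).
  { intros x eps He. destruct (Hsd x eps He) as [m Hm']. exists (n0 + S (2 * m))%nat.
    rewrite beta_odd. exact Hm'. }
  destruct (extend_iso d _ _ Hm Hc (alpha_iso d s n0 a0 b0 Hm Hs H0) Da Db) as [g [G1 [G2 G3]]].
  exists g. split; [|split]; auto.
  intros x Hx. destruct (In_nth A x (s 0%nat) Hx) as [i [Hi Hix]].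
  destruct (alpha_init d s n0 a0 b0 i Hi) as [e1 e2].
  rewrite <- Hix. change (nth i A (s 0%nat)) with (a0 i). rewrite <- e1, G3, e2, e1. reflexivity.
Qed.

Theorem mainTheorem1 (X : Type) (d : X -> X -> R) (Hpol : polish_metric d) :
  scott_rank_zero d <-> ultrahomogeneous d.
Proof.
  split.
  - apply sr0_uh; auto.
  - apply uh_sr0. apply Hpol.
Qed.
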